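(* Let $X$ be the set of the six transpositions of $\mathrm{Sym}(4)$, with distinguished letter $(1\,2)$, and let $A=\mathrm{Alt}(4)$ act faithfully and transitively on $X$ by conjugation, $x.a=a^{-1}xa$. Let $b\in\mathrm{St}(1)\le\mathrm{Aut}(X^* )$ be defined by $b|_{(1\,2)}=b$, $b|_{(3\,4)}=(1\,2\,3)$, and $b|_x=(1\,2)(3\,4)$ for all $x\in X\setminus\{(1\,2),(3\,4)\}$ (elements of $A$ acting as rooted automorphisms), let $B=\langle b\rangle$ and $G=\langle A\cup B\rangle$. Then $G$ is a CS group which is stable and strongly orbitwise-abelian, the dynamical system $\Lambda_{b'}$ is eventually trivial for every $b'\in B$, and $G$ is periodic.
   Context: For an alphabet $X$ with distinguished letter $0$ (here $0=(1\,2)$), $\dot X=X\setminus\{0\}$; $X^*$ is the free monoid on $X$ viewed as a rooted tree; $\mathrm{Aut}(X^* )$ acts on the right; sections are defined by $(u\star v).g=u.g\star v.(g|_u)$; elements of $\mathrm{Sym}(X)$ are rooted automorphisms; $\mathrm{St}(1)$ is the first layer stabiliser. A CS group is $\langle A\cup B\rangle$ with $A\le\mathrm{Sym}(X)$ transitive and $B\le\mathrm{St}(1)$ such that $b|_0=b$ for $b\in B$ and the $b|_x$ ($b\in B$, $x\in\dot X$) lie in $A$ and generate $A$. $\mathrm{orb}_c(0)$ is the $\langle c\rangle$-orbit of $0$, $\ell_c(0)$ its length. $\mathrm{mp}_A(0,x)=\{c\in A:0.c=x\}$; fix $e_{0\mapsto x}\in\mathrm{mp}_A(0,x)$ with $e_{0\mapsto0}=1_A$.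 $\mathfrak C(a,x)=\{cac^{-1}:c\in\mathrm{mp}_A(0,x)\}$; $\mathfrak X(a,x)=\bigcup_{c\in\mathfrak C(a,x)}\mathrm{orb}_c(0)\setminus\{0\}$. $\lambda_{b'}(a)=b'|_{0.a}\cdots b'|_{0.a^{\ell_a(0)-1}}$, $\lambda_{b'}(a,x)=\lambda_{b'}(e_{0\mapsto x}ae_{0\mapsto x}^{-1})$, $\Lambda_{b'}(P)=\bigcup_{a\in P}\{\lambda_{b'}(a,x):x\in X\}$ for $P\subseteq A$; eventually trivial means: for every $a$ there is $n$ with $\Lambda_{b'}^m(\{a\})\subseteq\{1_A\}$ for all $m>n$. $G$ is stable if $\lambda_{b'}(c')=\lambda_{b'}(c'')$ for all $b'\in B$, $a\in A$, $x\in X$, $c',c''\in\mathfrak C(a,x)$; strongly orbitwise-abelian if $\langle b'|_y:y\in\mathfrak X(a,x),b'\in B\rangle$ is abelian for all $a,x$. Periodic: every element has finite order. *)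

(* Defs.v *)
From mathcomp Require Import all_boot all_fingroup all_solvable.
Set Implicit Arguments. Unset Strict Implicit. Unset Printing Implicit Defensive.

(* An automorphism g is represented by the map u |-> u.g on words       *)
(* (right action); the product g h acts as u.(gh) = (u.g).h.           *)
(* Equality of automorphisms is extensional equality (=1).             *)
Section Tree.
Variable X : finType.

Definition taut := seq X -> seq X.

Definition tmul (g h : taut) : taut := fun u => h (g u).
Definition tid : taut := fun u => u.

Definition is_taut (g : taut) : Prop :=
  [/\ (forall u, size (g u) = size u),
      (forall u v, take (size u) (g (u ++ v)) = g u) & bijective g].

Definition in_St1 (g : taut) : Prop := forall x : X, g [:: x] = [:: x].

Definition sect (g : taut) (u : seq X) : taut :=
  fun v => drop (size u) (g (u ++ v)).

Definition rooted (a : {perm X}) : taut :=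
  fun u => if u is y :: w then a y :: w else [::].

Inductive gen (S : taut -> Prop) : taut -> Prop :=
| gen_id : gen S tid
| gen_S g : S g -> gen S g
| gen_mul g h : gen S g -> gen S h -> gen S (tmul g h)
| gen_inv g h : gen S g -> cancel g h -> cancel h g -> gen S h
| gen_ext g h : gen S g -> g =1 h -> gen S h.

Variable o : X.
Implicit Types (A : {set {perm X}}) (B : taut -> Prop).
Local Open Scope group_scope.

Definition ell (c : {perm X}) : nat := #|orbit 'P <[c]> o|.

Definition Cset A (a : {perm X}) (x : X) : {set {perm X}} :=
  [set c * a * c^-1 | c in A & c o == x].

Definition Xset A (a : {perm X}) (x : X) (y : X) : Prop :=
  exists2 c, c \in Cset A a x & (y \in orbit 'P <[c]> o) && (y != o).

Definition lam (b' : taut) (a : {perm X}) : taut :=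
  foldl (fun f i => tmul f (sect b' [:: (a ^+ i) o])) tid (iota 1 (ell a).-1).

(* Lambda_{b'}(P) = { lambda_{b'}(e_x a e_x^-1) : a in P, x in X },
   elements of A being identified with rooted automorphisms. *)
Definition Lam (e : X -> {perm X}) (b' : taut) (P : {perm X} -> Prop)
  : {perm X} -> Prop :=
  fun p => exists a x, P a /\ (rooted p =1 lam b' (e x * a * (e x)^-1)).

Definition eventually_trivial (A : {set {perm X}}) (e : X -> {perm X})
    (b' : taut) : Prop :=
  forall a, a \in A -> exists n, forall m, n < m ->
    forall p, iter m (Lam e b') (eq a) p -> p = 1.

Definition CS_group A B : Prop :=
  [/\ group_set A,
      (forall x, exists2 a, a \in A & a o = x),
      (forall b', B b' -> [/\ is_taut b', in_St1 b' & (sect b' [:: o] =1 b')]),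
      (forall b' x, B b' -> x != o -> exists2 a, a \in A & (sect b' [:: x] =1 rooted a))
    & exists S : {set {perm X}},
        (forall a, a \in S <-> exists b' x, [/\ B b', x != o & (sect b' [:: x] =1 rooted a)])
        /\ <<S>> = A].

Definition is_stable A B : Prop :=
  forall b' a x c1 c2, B b' -> a \in A -> c1 \in Cset A a x -> c2 \in Cset A a x ->
    lam b' c1 =1 lam b' c2.

Definition strongly_orbitwise_abelian A B : Prop :=
  forall a x, a \in A ->
    let S := fun g => exists b' y, [/\ B b', Xset A a x y & (g =1 sect b' [:: y])] in
    forall g h, gen S g -> gen S h -> tmul g h =1 tmul h g.

Definition is_periodic (G : taut -> Prop) : Prop :=
  forall g, G g -> exists2 n, 0 < n & forall u, iter n g u = u.

(* self-similar element of St(1): s x = None means section at x is the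
   element itself, s x = Some p means section at x is rooted p *)
Fixpoint ssact (s : X -> option {perm X}) (u : seq X) : seq X :=
  match u with
  | [::] => [::]
  | x :: w => x :: match s x with None => ssact s w | Some p => rooted p w end
  end.

End Tree.

Local Open Scope group_scope.

Definition is_transp (s : 'S_4) : bool :=
  [exists i, exists j, (i != j) && (s == tperm i j)].

(* X = the six transpositions of Sym(4) (points 1..4 are 'I_4 = 0..3) *)
Definition X4 := {s : 'S_4 | is_transp s}.

Lemma is_transpJ (s a : 'S_4) : is_transp s -> is_transp (s ^ a).
Proof.
move/existsP=> [i /existsP [j /andP [ij /eqP ->]]].
apply/existsP; exists (a i); apply/existsP; exists (a j).
by rewrite tpermJ (inj_eq perm_inj) ij eqxx.
Qed.

Lemma is_transp_t (i j : 'I_4) : i != j -> is_transp (tperm i j).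
Proof. by move=> ij; apply/existsP; exists i; apply/existsP; exists j; rewrite ij eqxx. Qed.

Definition tr12 : X4 := Sub (tperm (@Ordinal 4 0 isT) (@Ordinal 4 1 isT)) (is_transp_t (isT : (@Ordinal 4 0 isT) != (@Ordinal 4 1 isT))).
Definition tr34 : X4 := Sub (tperm (@Ordinal 4 2 isT) (@Ordinal 4 3 isT)) (is_transp_t (isT : (@Ordinal 4 2 isT) != (@Ordinal 4 3 isT))).

Definition conjT (a : 'S_4) (x : X4) : X4 := Sub (val x ^ a) (is_transpJ a (valP x)).

Lemma conjT_inj a : injective (conjT a).
Proof. by move=> x y /(congr1 val) /= /conjg_inj /val_inj. Qed.

Definition conjX (a : 'S_4) : {perm X4} := perm (@conjT_inj a).

Definition A4 : {set {perm X4}} := conjX @: Alt 'I_4.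

(* (1 2 3) : 1->2->3->1 and (1 2)(3 4) in Sym(4) *)
Definition c123 : 'S_4 := tperm (@Ordinal 4 0 isT) (@Ordinal 4 1 isT) * tperm (@Ordinal 4 0 isT) (@Ordinal 4 2 isT).
Definition d1234 : 'S_4 := tperm (@Ordinal 4 0 isT) (@Ordinal 4 1 isT) * tperm (@Ordinal 4 2 isT) (@Ordinal 4 3 isT).

Definition bsec (x : X4) : option {perm X4} :=
  if x == tr12 then None
  else if x == tr34 then Some (conjX c123) else Some (conjX d1234).

Definition b4 : taut X4 := ssact bsec.
Definition b4inv : taut X4 := ssact (fun x => omap (fun p => p^-1) (bsec x)).

Definition B4 (f : taut X4) : Prop :=
  exists n, f =1 iter n b4 \/ f =1 iter n b4inv.

Definition G4 : taut X4 -> Prop :=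
  gen (fun f => (exists2 a, a \in A4 & f =1 rooted a) \/ B4 f).

(* Main.v *)
Require Import Defs.
From mathcomp Require Import all_boot all_fingroup all_solvable.
From mathcomp Require Import zify.
Set Implicit Arguments. Unset Strict Implicit. Unset Printing Implicit Defensive.
Local Open Scope group_scope.

Notation o0 := (@Ordinal 4 0 isT).
Notation o1 := (@Ordinal 4 1 isT).
Notation o2 := (@Ordinal 4 2 isT).
Notation o3 := (@Ordinal 4 3 isT).
Definition ords : seq 'I_4 := [:: o0; o1; o2; o3].
Lemma mem_ords k : k \in ords.
Proof. by case: k => [[|[|[|[|m]]]] H]. Qed.

Definition tpf (a b k : 'I_4) := if k == a then b else if k == b then a else k.
Lemma tpermE' a b k : tperm a b k = tpf a b k.
Proof.
rewrite /tpf; case: tpermP => [->|->|].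
- by rewrite eqxx.
- by case: eqP => [->|]; rewrite ?eqxx.
- by move=> H1 H2; rewrite (introF eqP H1) (introF eqP H2).
Qed.

Definition gw (ws : seq bool) : 'S_4 :=
  foldr (fun b s => (if b then c123 else d1234) * s) 1 ws.
Definition cf k := tpf o0 o2 (tpf o0 o1 k).
Definition df k := tpf o2 o3 (tpf o0 o1 k).
Definition gwf (ws : seq bool) (k : 'I_4) : 'I_4 :=
  foldl (fun k b => if b then cf k else df k) k ws.

Lemma gw_ev ws k : gw ws k = gwf ws k.
Proof.
elim: ws k => [|b ws IH] k /=; first by rewrite perm1.
rewrite permM IH; congr gwf; case: b.
- by rewrite /c123 permM !tpermE'.
- by rewrite /d1234 permM !tpermE'.
Qed.

Definition L12 : seq (seq bool) := [:: [:: ]; [:: true]; [:: false]; [:: true; true]; [:: true; false]; [:: false; true]; [:: true; true; false]; [:: true; false; true]; [:: false; true; true]; [:: false; true; false]; [:: true; true; false; true]; [:: true; false; true; true]].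

Lemma gw_even ws : gw ws \in Alt 'I_4.
Proof.
rewrite Alt_even; elim: ws => [|b ws IH] /=; first by rewrite odd_perm1.
rewrite odd_permM (negbTE IH) addbF; case: b.
- by rewrite /c123 odd_permM !odd_tperm.
- by rewrite /d1234 odd_permM !odd_tperm.
Qed.

Definition tab (s : 'S_4) := [seq s k | k <- ords].

Lemma card_Alt4 : #|Alt 'I_4| = 12.
Proof.
have := @card_Alt 'I_4; rewrite card_ord => /(_ isT) H.
by apply/eqP; rewrite -(eqn_pmul2l (isT : 0 < 2)) H.
Qed.

Lemma AltE s : s \in Alt 'I_4 -> exists2 ws, ws \in L12 & s = gw ws.
Proof.
move=> sA.
have U : uniq (map gw L12).
  apply: (@map_uniq _ _ tab); rewrite -map_comp.
  rewrite (eq_map (g := fun ws => [seq gwf ws k | k <- ords])); last first.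
    by move=> ws /=; rewrite /tab; apply: eq_map => k; rewrite gw_ev.
  by vm_compute.
pose A := [set t in map gw L12].
have sub : A \subset Alt 'I_4.
  by apply/subsetP => t; rewrite inE => /mapP [ws _ ->]; exact: gw_even.
have cA : #|A| = 12.
  by rewrite cardsE (card_uniqP U) size_map.
have eA : A = Alt 'I_4.
  by apply/eqP; rewrite eqEcard sub cA card_Alt4.
by move: sA; rewrite -eA inE => /mapP.
Qed.

Lemma X4P (x : X4) : exists i j, i != j /\ val x = tperm i j.
Proof. by case: x => s /= /existsP [i /existsP [j /andP [ij /eqP ->]]]; exists i, j. Qed.

Lemma tperm_inj (i j k l : 'I_4) : i != j -> tperm i j = tperm k l ->
  ((i == k) && (j == l)) || ((i == l) && (j == k)).
Proof.
move=> ij E.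
have Hi : tperm k l i = j by rewrite -E tpermL.
move: Hi; case: tpermP => [-> <-|-> <-|_ _ E']; rewrite ?eqxx ?orbT //.
by rewrite E' eqxx in ij.
Qed.

Definition peq (p q : 'I_4 * 'I_4) :=
  ((p.1 == q.1) && (p.2 == q.2)) || ((p.1 == q.2) && (p.2 == q.1)).

Lemma peq_eq (x y : X4) i j k l : val x = tperm i j -> val y = tperm k l ->
  peq (i,j) (k,l) -> x = y.
Proof.
move=> Hx Hy; rewrite /peq /= => /orP [/andP [/eqP e1 /eqP e2] | /andP [/eqP e1 /eqP e2]];
  apply: val_inj; by rewrite Hx Hy e1 e2 // tpermC.
Qed.

Lemma eq_peq (x y : X4) i j k l : i != j -> val x = tperm i j -> val y = tperm k l ->
  x = y -> peq (i,j) (k,l).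
Proof. by move=> ij Hx Hy E; apply: tperm_inj ij _; rewrite -Hx -Hy E. Qed.

Lemma conjX_val s x : val (conjX s x) = val x ^ s.
Proof. by rewrite /conjX permE. Qed.

Lemma conjX_t s x i j : val x = tperm i j -> val (conjX s x) = tperm (s i) (s j).
Proof. by move=> H; rewrite conjX_val H tpermJ. Qed.

Lemma conjX_iter (s : 'S_4) x i j n : val x = tperm i j ->
  val (iter n (conjX s) x) = tperm (iter n s i) (iter n s j).
Proof. by move=> H; elim: n => [|n IH] //=; rewrite (conjX_t _ IH). Qed.

Lemma conjXM s t : conjX (s * t) = conjX s * conjX t.
Proof. by apply/permP => x; apply: val_inj; rewrite permM !conjX_val conjgM. Qed.

Lemma conjX1 : conjX 1 = 1.
Proof. by apply/permP => x; apply: val_inj; rewrite conjX_val perm1 conjg1. Qed.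

Lemma A4_gs : group_set A4.
Proof.
apply/group_setP; split.
  by rewrite -conjX1; apply: imset_f; exact: group1.
move=> _ _ /imsetP [s Hs ->] /imsetP [t Ht ->].
by rewrite -conjXM; apply: imset_f; exact: groupM.
Qed.
Canonical A4g := Group A4_gs.

Lemma conjX_expg1 (s : 'S_4) n : (forall k, iter n s k = k) -> conjX s ^+ n = 1.
Proof.
move=> H; apply/permP => x; rewrite permX perm1; apply: val_inj.
have [i [j [_ Hx]]] := X4P x.
by rewrite (conjX_iter _ _ Hx) !H.
Qed.

Lemma val_tr12 : val tr12 = tperm o0 o1. Proof. by []. Qed.
Lemma val_tr34 : val tr34 = tperm o2 o3. Proof. by []. Qed.

Definition PCm (f : 'I_4 -> 'I_4) :=
  let p1 := (f o0, f o1) in let p2 := (f (f o0), f (f o1)) in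
  (all (fun k => iter 2 f k == k) ords && (peq p1 (o0,o1) || peq p1 (o2,o3))) ||
  [&& all (fun k => iter 3 f k == k) ords, ~~ peq p1 (o0,o1), ~~ peq p1 (o2,o3),
      ~~ peq p2 (o0,o1) & ~~ peq p2 (o2,o3)].
Lemma PCm_all : all (fun ws => PCm (gwf ws)) L12.
Proof. by vm_compute. Qed.

Lemma PC c : c \in A4 -> (c ^+ 2 = 1 /\ (c tr12 = tr12 \/ c tr12 = tr34)) \/
   (c ^+ 3 = 1 /\ [/\ c tr12 != tr12, c tr12 != tr34, c (c tr12) != tr12
                    & c (c tr12) != tr34]).
Proof.
case/imsetP => s /AltE [ws Hws ->] ->.
have := allP PCm_all ws Hws; rewrite /PCm.
set f := gwf ws.
have Ef : forall k, gw ws k = f k by move=> k; rewrite gw_ev.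
have It : forall n k, iter n (gw ws) k = iter n f k.
  by move=> n k; apply: eq_iter.
have V1 : val (conjX (gw ws) tr12) = tperm (f o0) (f o1).
  by rewrite (conjX_t _ val_tr12) !Ef.
have V2 : val (conjX (gw ws) (conjX (gw ws) tr12)) = tperm (f (f o0)) (f (f o1)).
  by rewrite (conjX_t _ V1) !Ef.
have nz1 : f o0 != f o1 by rewrite -!Ef (inj_eq perm_inj).
have nz2 : f (f o0) != f (f o1) by rewrite -!Ef !(inj_eq perm_inj).
case/orP => [/andP [/allP H2 /orP P] | /and5P [/allP H3 n1 n2 n3 n4]].
- left; split.
    by apply: conjX_expg1 => k; rewrite It; apply/eqP/H2/mem_ords.
  by case: P => P; [left|right]; apply: peq_eq V1 _ P.
- right; split.
    by apply: conjX_expg1 => k; rewrite It; apply/eqP/H3/mem_ords.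
  split; apply/negP => /eqP E.
  + by move: n1; rewrite (eq_peq nz1 V1 val_tr12 E).
  + by move: n2; rewrite (eq_peq nz1 V1 val_tr34 E).
  + by move: n3; rewrite (eq_peq nz2 V2 val_tr12 E).
  + by move: n4; rewrite (eq_peq nz2 V2 val_tr34 E).
Qed.

Definition trm := all (fun i => all (fun j => (i == j) ||
   has (fun ws => peq (gwf ws o0, gwf ws o1) (i,j)) L12) ords) ords.
Lemma trm_ok : trm. Proof. by vm_compute. Qed.

Lemma A4_trans x : exists2 k, k \in A4 & k tr12 = x.
Proof.
have [i [j [ij Hx]]] := X4P x.
have := allP (allP trm_ok i (mem_ords i)) j (mem_ords j).
rewrite (negbTE ij) orFb => /hasP [ws _ P].
exists (conjX (gw ws)); first by apply: imset_f; exact: gw_even.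
by apply: peq_eq (conjX_t _ val_tr12) Hx _; rewrite !gw_ev.
Qed.

Definition C := conjX c123.
Definition D := conjX d1234.

Lemma c123E : c123 = gw [:: true]. Proof. by rewrite /gw /= mulg1. Qed.
Lemma d1234E : d1234 = gw [:: false]. Proof. by rewrite /gw /= mulg1. Qed.

Lemma C_A4 : C \in A4.
Proof. by rewrite /C c123E; apply: imset_f; exact: gw_even. Qed.
Lemma D_A4 : D \in A4.
Proof. by rewrite /D d1234E; apply: imset_f; exact: gw_even. Qed.

Lemma C3 : C ^+ 3 = 1.
Proof.
apply: conjX_expg1 => k; rewrite c123E (eq_iter (gw_ev _)).
by have := mem_ords k; rewrite !inE => /or4P [] /eqP ->.
Qed.
Lemma D2 : D ^+ 2 = 1.
Proof.
apply: conjX_expg1 => k; rewrite d1234E (eq_iter (gw_ev _)).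
by have := mem_ords k; rewrite !inE => /or4P [] /eqP ->.
Qed.

Lemma C_o : C tr12 != tr12.
Proof.
apply/negP => /eqP E.
have := eq_peq (isT : o0 != o1) val_tr12 (conjX_t c123 val_tr12) (esym E).
by rewrite c123E !gw_ev.
Qed.
Lemma D_o : D tr12 = tr12.
Proof. by apply: peq_eq (conjX_t d1234 val_tr12) val_tr12 _; rewrite d1234E !gw_ev. Qed.
Lemma tr34_o : tr34 != tr12.
Proof. by apply/negP => /eqP E; have := eq_peq (isT : o2 != o3) val_tr34 val_tr12 E. Qed.

Definition tr13 : X4 := Sub (tperm o0 o2) (is_transp_t (isT : o0 != o2)).
Lemma val_tr13 : val tr13 = tperm o0 o2. Proof. by []. Qed.
Lemma tr13_o : tr13 != tr12.
Proof. by apply/negP => /eqP E; have := eq_peq (isT : o0 != o2) val_tr13 val_tr12 E. Qed.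
Lemma tr13_34 : tr13 != tr34.
Proof. by apply/negP => /eqP E; have := eq_peq (isT : o0 != o2) val_tr13 val_tr34 E. Qed.

Definition bsecn (n : nat) (x : X4) := omap (fun p => p ^+ n) (bsec x).
Definition bpow n : taut X4 := ssact (bsecn n).
Arguments bpow : simpl never.

Lemma bsec_o : bsec tr12 = None. Proof. by rewrite /bsec eqxx. Qed.
Lemma bsec_34 : bsec tr34 = Some C. Proof. by rewrite /bsec (negbTE tr34_o) eqxx. Qed.
Lemma bsec_D y : y != tr12 -> y != tr34 -> bsec y = Some D.
Proof. by move=> h1 h2; rewrite /bsec (negbTE h1) (negbTE h2). Qed.
Lemma bsec_None y : (bsec y == None) = (y == tr12).
Proof. by rewrite /bsec; case: ifP => //; case: ifP. Qed.
Lemma bsec_some y q : bsec y = Some q -> q = C \/ q = D.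
Proof. by rewrite /bsec; case: ifP => // _; case: ifP => _ [<-]; [left|right]. Qed.

Lemma rooted_mul (p q : {perm X4}) (u : seq X4) : rooted q (rooted p u) = rooted (p * q) u.
Proof. by case: u => //= y w; rewrite permM. Qed.
Lemma rooted1 (u : seq X4) : rooted 1 u = u.
Proof. by case: u => //= y w; rewrite perm1. Qed.
Lemma rooted_inj (p q : {perm X4}) : rooted p =1 rooted q -> p = q.
Proof. by move=> H; apply/permP => y; have := H [:: y]; case. Qed.
Lemma size_rooted (p : {perm X4}) (u : seq X4) : size (rooted p u) = size u.
Proof. by case: u. Qed.

Lemma bpow_cons n y u : bpow n (y :: u) =
  y :: (if bsec y is Some q then rooted (q ^+ n) u else bpow n u).
Proof. by rewrite /bpow /= /bsecn; case: bsec. Qed.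

Lemma pow6 y q : bsec y = Some q -> q ^+ 6 = 1.
Proof.
case/bsec_some => ->.
- by rewrite (_ : 6 = 3 * 2)%N // expgM C3 expg1n.
- by rewrite (_ : 6 = 2 * 3)%N // expgM D2 expg1n.
Qed.

Lemma bpowD m n u : bpow m (bpow n u) = bpow (n + m) u.
Proof.
elim: u => // y u IH; rewrite !bpow_cons.
by case: bsec => [q|]; rewrite ?rooted_mul -?expgD ?IH.
Qed.

Lemma bpow_6k k u : bpow (6 * k) u = u.
Proof.
elim: u => // y u IH; rewrite !bpow_cons.
case E: bsec => [q|]; last by rewrite IH.
by rewrite expgM (pow6 E) expg1n rooted1.
Qed.

Lemma bpow0 u : bpow 0 u = u.
Proof. by rewrite (bpow_6k 0). Qed.

Lemma b4_bpow1 u : b4 u = bpow 1 u.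
Proof.
elim: u => // y u IH; rewrite bpow_cons /b4 /=.
by case: bsec => [q|]; rewrite ?expg1 // -IH.
Qed.

Lemma iter_b4 n u : iter n b4 u = bpow n u.
Proof.
elim: n u => [|n IH] u /=; first by rewrite bpow0.
by rewrite IH b4_bpow1 bpowD addn1.
Qed.

Lemma inv_pow5 y q : bsec y = Some q -> q^-1 = q ^+ 5.
Proof.
move=> E; apply: (@mulIg _ q); rewrite -expgSr (pow6 E).
by rewrite mulVg.
Qed.

Lemma b4inv_bpow5 u : b4inv u = bpow 5 u.
Proof.
elim: u => // y u IH; rewrite bpow_cons /b4inv /=.
case E: bsec => [q|] /=; last by rewrite -IH.
by rewrite (inv_pow5 E).
Qed.

Lemma iter_b4inv n u : iter n b4inv u = bpow (5 * n) u.
Proof.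
elim: n u => [|n IH] u /=; first by rewrite bpow0.
by rewrite IH b4inv_bpow5 bpowD mulnS addnC.
Qed.

Lemma B4E f : B4 f -> exists m, forall u, f u = bpow m u.
Proof.
case=> n [H|H]; [exists n | exists (5 * n)%N] => u; rewrite H.
- exact: iter_b4.
- exact: iter_b4inv.
Qed.

Lemma size_bpow m u : size (bpow m u) = size u.
Proof.
elim: u => // y u IH; rewrite bpow_cons /=.
by case: bsec => [q|]; rewrite ?size_rooted ?IH.
Qed.

Lemma take_bpow m u v : take (size u) (bpow m (u ++ v)) = bpow m u.
Proof.
elim: u => [|y u IH]; first by rewrite /= take0.
rewrite cat_cons !bpow_cons; case: bsec => [q|] /=; last by rewrite IH.
by case: u {IH} => [|z u] /=; rewrite ?take0 ?take_size_cat.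
Qed.

Lemma bpow_cancel m : cancel (bpow m) (bpow (5 * m)).
Proof. by move=> u; rewrite bpowD -{1}(mul1n m) -mulnDl bpow_6k. Qed.
Lemma bpow_cancel' m : cancel (bpow (5 * m)) (bpow m).
Proof. by move=> u; rewrite bpowD -mulSnr bpow_6k. Qed.

Lemma sectE (f : taut X4) y v : sect f [:: y] v = drop 1 (f (y :: v)).
Proof. by []. Qed.

Lemma sect_bpow_o m v : sect (bpow m) [:: tr12] v = bpow m v.
Proof. by rewrite sectE bpow_cons bsec_o /= drop0. Qed.

Lemma sect_bpow m y q v : bsec y = Some q -> sect (bpow m) [:: y] v = rooted (q ^+ m) v.
Proof. by move=> E; rewrite sectE bpow_cons E /= drop0. Qed.

Lemma sect_ext (f g : taut X4) u : f =1 g -> sect f u =1 sect g u.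
Proof. by move=> H v; rewrite /sect H. Qed.

Lemma invp_eq (k : {perm X4}) y z : (k^-1 y == z) = (y == k z).
Proof. by apply/eqP/eqP => [<-|->]; rewrite ?permKV ?permK. Qed.

Lemma conjA4 k a : k \in A4 -> a \in A4 -> k * a * k^-1 \in A4.
Proof. by move=> kA aA; rewrite !groupM ?groupV. Qed.

Lemma conj_pt (k a : {perm X4}) y : (k * a * k^-1) y = k^-1 (a (k y)).
Proof. by rewrite !permM. Qed.

Lemma conj_E (k b : {perm X4}) : k * b * k^-1 = b ^ k^-1.
Proof. by rewrite conjgE invgK mulgA. Qed.

Lemma conj_exp1 (k a : {perm X4}) n : ((k * a * k^-1) ^+ n == 1) = (a ^+ n == 1).
Proof. by rewrite conj_E -conjXg conjg_eq1. Qed.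

Lemma iter_mod (c : {perm X4}) k i y : iter k c y = y -> iter i c y = iter (i %% k) c y.
Proof.
move=> H; rewrite {1}(divn_eq i k) addnC iterD; congr iter.
by elim: (i %/ k) => // q IH; rewrite mulSn iterD IH H.
Qed.

Lemma ell_eq (c : {perm X4}) k : 0 < k -> iter k c tr12 = tr12 ->
  uniq (traject c tr12 k) -> ell tr12 c = k.
Proof.
move=> k0 Hk U; rewrite /ell -porbitE.
rewrite -(size_traject c tr12 k) -(card_uniqP U); apply: eq_card => y.
apply/porbitP/trajectP => [[i ->]|[i _ ->]]; last by exists i; rewrite permX.
exists (i %% k); first by rewrite ltn_mod.
by rewrite permX (iter_mod _ Hk).
Qed.

Definition Lval (m : nat) (c : {perm X4}) : {perm X4} :=
  if (c tr12 != tr12) && (c ^+ 2 == 1) then C ^+ m else 1.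

Lemma expg2_pt (c : {perm X4}) y : (c ^+ 2) y = c (c y).
Proof. by rewrite expgS expg1 permM. Qed.
Lemma expg3_pt (c : {perm X4}) y : (c ^+ 3) y = c (c (c y)).
Proof. by rewrite expgS permM expg2_pt. Qed.

Lemma c23 (c : {perm X4}) : c ^+ 2 = 1 -> c ^+ 3 = 1 -> c = 1.
Proof. by move=> h2; rewrite expgSr h2 mul1g. Qed.

Lemma lam_val (b' : taut X4) m c : (forall u, b' u = bpow m u) -> c \in A4 ->
  lam tr12 b' c =1 rooted (Lval m c).
Proof.
move=> Hb cA u; rewrite /lam /Lval.
case: (PC cA) => [[c2 [co|co]] | [c3 [n1 n2 n3 n4]]].
- have -> : ell tr12 c = 1%N by apply: ell_eq => //=; rewrite co.
  by rewrite co eqxx /= rooted1.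
- have -> : ell tr12 c = 2%N.
    apply: ell_eq => //=; first by rewrite -expg2_pt c2 perm1.
    by rewrite inE co eq_sym tr34_o.
  rewrite /= /tmul /tid expg1 co c2 eqxx tr34_o /=.
  by rewrite sectE Hb -sectE (sect_bpow _ _ bsec_34).
- have -> : ell tr12 c = 3%N.
    apply: ell_eq => //=; first by rewrite -expg3_pt c3 perm1.
    by rewrite !inE negb_or (inj_eq perm_inj) ![tr12 == _]eq_sym n1 n3.
  have c2' : c ^+ 2 != 1.
    by apply/eqP => h; move: n1; rewrite (c23 h c3) perm1 eqxx.
  rewrite (negbTE c2') andbF /= /tmul /tid expg1 expg2_pt.
  rewrite sectE Hb -sectE (sect_bpow _ _ (bsec_D n3 n4)).
  rewrite sectE Hb -sectE (sect_bpow _ _ (bsec_D n1 n2)).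
  by rewrite rooted_mul -expgD addnn -muln2 mulnC expgM D2 expg1n rooted1.
Qed.

Lemma CS_part : CS_group tr12 A4 B4.
Proof.
split.
- exact: A4_gs.
- exact: A4_trans.
- move=> b' /B4E [m Hm]; split.
  + split.
    * by move=> u; rewrite Hm size_bpow.
    * by move=> u v; rewrite !Hm take_bpow.
    * exists (bpow (5 * m)) => u; rewrite Hm.
      - exact: bpow_cancel.
      - exact: bpow_cancel'.
  + by move=> x; rewrite Hm bpow_cons; case: bsec => [q|] //; rewrite /bpow.
  + by move=> v; rewrite (sect_ext _ Hm) sect_bpow_o Hm.
- move=> b' x /B4E [m Hm] xo.
  case E: (bsec x) => [q|]; last by move: (bsec_None x); rewrite E eqxx (negbTE xo).
  exists (q ^+ m).
    by apply: groupX; case: (bsec_some E) => ->; [exact: C_A4|exact: D_A4].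
  by move=> v; rewrite (sect_ext _ Hm) (sect_bpow _ _ E).
- exists (<[C]> :|: <[D]>); split.
  + move=> a; split.
    * rewrite inE => /orP [/cycleP [i ->]|/cycleP [i ->]].
      - exists (iter i b4), tr34; split; first by exists i; left.
          exact: tr34_o.
        by move=> v; rewrite (sect_ext _ (iter_b4 i)) (sect_bpow _ _ bsec_34).
      - exists (iter i b4), tr13; split; first by exists i; left.
          exact: tr13_o.
        by move=> v; rewrite (sect_ext _ (iter_b4 i)) (sect_bpow _ _ (bsec_D tr13_o tr13_34)).
    * case=> b' [x [/B4E [m Hm] xo Hs]].
      case E: (bsec x) => [q|]; last by move: (bsec_None x); rewrite E eqxx (negbTE xo).
      have -> : a = q ^+ m.
        apply: rooted_inj => v; rewrite -Hs.
        by rewrite (sect_ext _ Hm) (sect_bpow _ _ E).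
      by rewrite inE; case: (bsec_some E) => ->; rewrite mem_cycle ?orbT.
  + apply/eqP; rewrite eqEsubset; apply/andP; split.
      by rewrite gen_subG subUset !cycle_subG C_A4 D_A4.
    apply/subsetP => _ /imsetP [s /AltE [ws _ ->] ->].
    elim: ws => [|b ws IH] /=; first by rewrite conjX1 group1.
    rewrite conjXM groupM //; apply: mem_gen; rewrite inE.
    by case: b; rewrite cycle_id ?orbT.
Qed.

Lemma stable_part : is_stable tr12 A4 B4.
Proof.
move=> b' a x c1 c2 /B4E [m Hm] aA.
have key : forall c, c \in Cset tr12 A4 a x ->
    lam tr12 b' c =1 rooted (if (a x != x) && (a ^+ 2 == 1) then C ^+ m else 1).
  move=> c /imsetP [k]; rewrite inE => /andP [kA /eqP kx] ->.
  move=> u; rewrite (lam_val Hm (conjA4 kA aA)) /Lval conj_pt kx invp_eq kx.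
  by rewrite conj_exp1.
by move=> c1C c2C u; rewrite (key _ c1C) (key _ c2C).
Qed.

Lemma soa_part : strongly_orbitwise_abelian tr12 A4 B4.
Proof.
move=> a x aA /=.
set q := if a ^+ 2 == 1 then C else D.
set S := fun g => _.
have HS : forall g, S g -> exists i, g =1 rooted (q ^+ i).
  move=> g [b' [y [/B4E [m Hm] [c cC /andP [yo yn]] Hg]]].
  move: cC => /imsetP [k]; rewrite inE => /andP [kA /eqP kx] Ec.
  have cA : c \in A4 by rewrite Ec conjA4.
  have cq : (c ^+ 2 == 1) = (a ^+ 2 == 1) by rewrite Ec conj_exp1.
  have By : bsec y = Some q.
    move: yo; rewrite -porbitE => /porbitP [i Ei].
    case: (PC cA) => [[c2 [co|co]] | [c3 [n1 n2 n3 n4]]].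
    - by move: yn; rewrite Ei permX (@iter_mod c 1 i tr12 co) modn1 eqxx.
    - rewrite /q -cq c2 eqxx.
      move: yn; rewrite (_ : y = (c ^+ (i %% 2)) tr12); last by rewrite (expg_mod _ c2).
      move: (ltn_mod i 2); case: (i %% 2) => [|[|j]] // _.
      + by rewrite expg0 perm1 eqxx.
      + by rewrite expg1 co bsec_34.
    - have c2' : c ^+ 2 != 1.
        by apply/eqP => h; move: n1; rewrite (c23 h c3) perm1 eqxx.
      rewrite /q -cq (negbTE c2').
      move: yn; rewrite (_ : y = (c ^+ (i %% 3)) tr12); last by rewrite (expg_mod _ c3).
      move: (ltn_mod i 3); case: (i %% 3) => [|[|[|j]]] // _.
      + by rewrite expg0 perm1 eqxx.
      + by rewrite expg1 (bsec_D n1 n2).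
      + by rewrite expg2_pt (bsec_D n3 n4).
  exists m => v; rewrite Hg (sect_ext _ Hm) (sect_bpow _ _ By).
  done.
have HG : forall g, gen S g -> exists2 r, r \in <[q]> & g =1 rooted r.
  move=> g; elim => {g}.
  - by exists 1; rewrite ?group1 // => u; rewrite rooted1.
  - by move=> g /HS [i Hi]; exists (q ^+ i); rewrite ?mem_cycle.
  - move=> g h _ [r1 r1q H1] _ [r2 r2q H2]; exists (r1 * r2); first by rewrite groupM.
    by move=> u; rewrite /tmul H1 H2 rooted_mul.
  - move=> g h _ [r rq Hg] Hgh Hhg; exists r^-1; first by rewrite groupV.
    move=> u; have E : g (rooted r^-1 u) = u by rewrite Hg rooted_mul mulVg rooted1.
    by rewrite -{1}E Hgh.
  - by move=> g h _ [r rq Hg] E; exists r => // u; rewrite -E.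
move=> g h /HG [r1 /cycleP [i ->] Hg] /HG [r2 /cycleP [j ->] Hh] u.
by rewrite /tmul !Hg !Hh !rooted_mul -!expgD addnC.
Qed.

Lemma Lval_A4 m c : Lval m c \in A4.
Proof. by rewrite /Lval; case: ifP => _; rewrite ?group1 // groupX // C_A4. Qed.

Lemma Lval_3 m c : Lval m c ^+ 3 = 1.
Proof.
rewrite /Lval; case: ifP => _; last by rewrite expg1n.
by rewrite -expgM mulnC expgM C3 expg1n.
Qed.

Lemma Lval_1 m c : c ^+ 3 = 1 -> Lval m c = 1.
Proof.
move=> c3; rewrite /Lval; case: ifP => // /andP [co /eqP c2].
by move: co; rewrite (c23 c2 c3) perm1 eqxx.
Qed.

Lemma et_part (e : X4 -> {perm X4}) :
  e tr12 = 1 -> (forall x, e x \in A4) -> (forall x, e x tr12 = x) ->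
  forall b', B4 b' -> eventually_trivial tr12 A4 e b'.
Proof.
move=> _ eA _ b' /B4E [m Hm] a aA.
have key : forall n p, iter n (Lam tr12 e b') (eq a) p ->
    [/\ p \in A4, (0 < n -> p ^+ 3 = 1) & (1 < n -> p = 1)].
  elim => [|n IH] p /=; first by move=> <-; split.
  case=> a' [x [Ha' Hr]].
  have [a'A a3 a1] := IH _ Ha'.
  have cA := conjA4 (eA x) a'A.
  have Ep : p = Lval m (e x * a' * (e x)^-1).
    by apply: rooted_inj => u; rewrite Hr (lam_val Hm cA).
  rewrite Ep; split => //; first exact: Lval_A4.
    by move=> _; exact: Lval_3.
  move=> n0; apply: Lval_1; apply/eqP; rewrite conj_exp1; apply/eqP.
  exact: a3.
exists 1%N => n n1 p Hp.
by have [_ _ ->] := key n p Hp.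
Qed.

Inductive letter := LR of {perm X4} | LB of nat.
Definition letfun (l : letter) : taut X4 :=
  match l with LR q => rooted q | LB n => bpow n end.
Fixpoint ev (w : seq letter) (u : seq X4) : seq X4 :=
  if w is l :: w' then ev w' (letfun l u) else u.
Fixpoint root (w : seq letter) : {perm X4} :=
  match w with [::] => 1 | LR q :: w' => q * root w' | LB _ :: w' => root w' end.
Fixpoint bl (w : seq letter) : seq ({perm X4} * nat) :=
  match w with
  | [::] => [::]
  | LR q :: w' => [seq (q * e.1, e.2) | e <- bl w']
  | LB n :: w' => (1, n) :: bl w'
  end.
Definition emit (y : X4) (e : {perm X4} * nat) : letter :=
  if bsec (e.1 y) is Some q then LR (q ^+ e.2) else LB e.2.
Definition Sw (w : seq letter) (y : X4) := map (emit y) (bl w).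
Fixpoint wpow n (w : seq letter) : seq letter := if n is n'.+1 then wpow n' w ++ w else [::].
Definition isB (l : letter) := if l is LB _ then true else false.
Definition wt (w : seq letter) := count isB w.
Definition inT (T : {set {perm X4}}) (w : seq letter) :=
  all (fun l => if l is LR q then q \in T else true) w.
Definition wA w := inT A4 w.
Definition pure w := all isB w.
Definition cls w : nat := if inT <[D]> w then 0%N else if inT <[C]> w then 1%N else 2%N.
Definition mu w : nat := (3 * wt w + cls w)%N.

Lemma bpow_nil n : bpow n [::] = [::]. Proof. by rewrite /bpow. Qed.

Lemma ev_nil w : ev w [::] = [::].
Proof. by elim: w => //= -[q|n] w IH; rewrite /= ?bpow_nil. Qed.

Lemma ev_cons w y u : ev w (y :: u) = root w y :: ev (Sw w y) u.
Proof.
elim: w y u => [|[q|n] w IH] y u.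
  by rewrite [root _]/= perm1.
all: rewrite [ev _ _]/=.
- rewrite IH permM; congr (_ :: ev _ u); rewrite /Sw /= -map_comp.
  by apply: eq_map => e /=; rewrite /emit /= permM.
- rewrite bpow_cons IH [root _]/=; congr (_ :: _).
  have -> : Sw (LB n :: w) y = emit y (1, n) :: Sw w y by [].
  rewrite [ev (_ :: _) _]/= /emit [(1, n).1]/= [(1, n).2]/= perm1.
  by case: bsec.
Qed.

Lemma ev_cat w1 w2 u : ev (w1 ++ w2) u = ev w2 (ev w1 u).
Proof. by elim: w1 u => //= l w1 IH u. Qed.

Lemma root_cat w1 w2 : root (w1 ++ w2) = root w1 * root w2.
Proof. by elim: w1 => [|[q|n] w1 IH] /=; rewrite ?mul1g ?IH ?mulgA. Qed.

Lemma bl_cat w1 w2 : bl (w1 ++ w2) = bl w1 ++ [seq (root w1 * e.1, e.2) | e <- bl w2].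
Proof.
elim: w1 => [|[q|n] w1 IH] /=.
- by rewrite (eq_map (g := id)) ?map_id // => -[p k] /=; rewrite mul1g.
- rewrite IH map_cat -map_comp; congr (_ ++ _).
  by apply: eq_map => e /=; rewrite mulgA.
- by rewrite IH.
Qed.

Lemma Sw_cat w1 w2 y : Sw (w1 ++ w2) y = Sw w1 y ++ Sw w2 (root w1 y).
Proof.
rewrite /Sw bl_cat map_cat -map_comp; congr (_ ++ _).
by apply: eq_map => e /=; rewrite /emit /= permM.
Qed.

Lemma iter_ev n w u : iter n (ev w) u = ev (wpow n w) u.
Proof. by elim: n u => //= n IH u; rewrite IH ev_cat. Qed.

Lemma root_wpow n w : root (wpow n w) = root w ^+ n.
Proof. by elim: n => //= n IH; rewrite root_cat IH expgSr. Qed.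

Lemma Sw_wpow n w y :
  Sw (wpow n w) y = flatten [seq Sw w ((root w ^+ i) y) | i <- iota 0 n].
Proof.
elim: n => // n IH.
have -> : wpow n.+1 w = wpow n w ++ w by [].
rewrite Sw_cat IH root_wpow -[n.+1]addn1 iotaD map_cat flatten_cat add0n.
by rewrite [flatten [seq _ | i <- iota n 1]]/= cats0.
Qed.

Lemma size_bl w : size (bl w) = wt w.
Proof. by elim: w => //= -[q|n] w IH; rewrite /= ?size_map IH. Qed.

Lemma isB_emit y e : isB (emit y e) = (e.1 y == tr12).
Proof. by rewrite /emit -bsec_None; case: bsec. Qed.

Lemma count_split (T : eqType) (l : seq T) (P Q : pred T) :
  (forall x, P x -> ~~ Q x) -> count (predU P Q) l = count P l + count Q l.
Proof.
move=> H; elim: l => //= x l ->.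
case Px: (P x) => /=; last by rewrite add0n addnCA.
by rewrite (negbTE (H x Px)) add0n addnA.
Qed.

Lemma wt_flat (O : seq X4) w : uniq O ->
  wt (flatten [seq Sw w y | y <- O]) = count (fun e : {perm X4} * nat => e.1^-1 tr12 \in O) (bl w).
Proof.
elim: O => [|y O IH] /= U.
  by rewrite (eq_count (a2 := pred0)) ?count_pred0.
case/andP: U => yO U; move: (IH U); rewrite /wt count_cat => ->.
have -> : count (fun e : {perm X4} * nat => e.1^-1 tr12 \in y :: O) (bl w) =
   count (predU (fun e : {perm X4} * nat => e.1^-1 tr12 == y)
                (fun e : {perm X4} * nat => e.1^-1 tr12 \in O)) (bl w).
  by apply: eq_count => e; rewrite inE.
rewrite count_split; last by move=> e /= /eqP ->.
congr (_ + _); rewrite /Sw count_map; apply: eq_count => e /=.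
by rewrite isB_emit invp_eq eq_sym.
Qed.

Lemma inT_cons T l w : inT T (l :: w) =
  (if l is LR q then q \in T else true) && inT T w.
Proof. by []. Qed.

Lemma inT_cl (G : {group {perm X4}}) w : inT G w ->
  root w \in G /\ (forall e, e \in bl w -> e.1 \in G).
Proof.
elim: w => [|[q|n] w IH].
- by move=> _; split; [exact: group1 | move=> e; rewrite [bl _]/= in_nil].
- rewrite inT_cons => /andP [qG /IH [rG H]].
  have -> : root (LR q :: w) = q * root w by [].
  have -> : bl (LR q :: w) = [seq (q * e.1, e.2) | e <- bl w] by [].
  split; first by rewrite groupM.
  by move=> _ /mapP [e eb ->]; rewrite groupM // H.
- rewrite inT_cons => /IH [rG H].
  have -> : root (LB n :: w) = root w by [].
  have -> : bl (LB n :: w) = (1, n) :: bl w by [].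
  split => // e; rewrite inE => /orP [/eqP -> |]; [exact: group1 | exact: H].
Qed.

Lemma all_flat (P : pred letter) (L : seq (seq letter)) :
  all P (flatten L) = all (all P) L.
Proof. by elim: L => //= s L IH; rewrite all_cat IH. Qed.

Lemma all_v (P : pred letter) (O : seq X4) w :
  (forall y e, y \in O -> e \in bl w -> P (emit y e)) ->
  all P (flatten [seq Sw w y | y <- O]).
Proof.
move=> H; rewrite all_flat all_map; apply/allP => y yO /=.
by rewrite /Sw all_map; apply/allP => e eb /=; apply: H.
Qed.

Lemma wA_Sw w y : wA (Sw w y).
Proof.
rewrite /wA /inT /Sw all_map; apply/allP => e _ /=; rewrite /emit.
case E: bsec => [q|] //; apply: groupX.
by case: (bsec_some E) => ->; [exact: C_A4 | exact: D_A4].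
Qed.

Lemma cycD_o r : r \in <[D]> -> r tr12 = tr12.
Proof.
case/cycleP => i ->; rewrite permX.
by elim: i => //= i ->; exact: D_o.
Qed.
Lemma cycD_2 r : r \in <[D]> -> r ^+ 2 = 1.
Proof. by case/cycleP => i ->; rewrite -expgM mulnC expgM D2 expg1n. Qed.
Lemma cycC_2 r : r \in <[C]> -> r ^+ 2 = 1 -> r = 1.
Proof.
case/cycleP => i -> h2; apply: c23 => //.
by rewrite -expgM mulnC expgM C3 expg1n.
Qed.

Lemma A4_23 a : a \in A4 -> a ^+ 2 = 1 \/ a ^+ 3 = 1.
Proof. by case/PC => [[]|[]]; auto. Qed.

Lemma A4_6 a : a \in A4 -> a ^+ 6 = 1.
Proof.
case/A4_23 => h.
- by rewrite (_ : 6 = 2 * 3)%N // expgM h expg1n.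
- by rewrite (_ : 6 = 3 * 2)%N // expgM h expg1n.
Qed.

Lemma A4_3 a : a \in A4 -> a ^+ 2 != 1 -> a ^+ 3 = 1.
Proof. by move=> aA /negbTE h2; case: (A4_23 aA) => // /eqP; rewrite h2. Qed.

Lemma A4_3_nofix a x : a \in A4 -> a ^+ 2 != 1 -> a x != x /\ a (a x) != x.
Proof.
move=> aA a2.
have [k kA kx] := A4_trans x.
have cA := conjA4 kA aA.
have c2 : (k * a * k^-1) ^+ 2 != 1 by rewrite conj_exp1.
case: (PC cA) => [[/eqP c2' _]|[_ [n1 _ n3 _]]]; first by rewrite c2' in c2.
move: n1 n3; rewrite !conj_pt kx !invp_eq permKV kx => n1 n3; split => //.
Qed.

Lemma FA2 a p x y z : a \in A4 -> p \in A4 -> a ^+ 2 = 1 -> a x != x ->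
  y \in [:: x; a x] -> z \in [:: x; a x] -> p z = tr12 -> p y != tr12 ->
  p y = tr34.
Proof.
move=> aA pA a2 ax yO zO pz py.
have yz : y = a z.
  move: yO zO py pz; rewrite !inE => /orP [] /eqP -> /orP [] /eqP -> py pz //.
  - by rewrite pz eqxx in py.
  - by rewrite -expg2_pt a2 perm1.
  - by rewrite pz eqxx in py.
have cA := conjA4 (groupVr pA) aA.
have c2 : (p^-1 * a * p^-1^-1) ^+ 2 = 1 by apply/eqP; rewrite conj_exp1 a2.
have co : (p^-1 * a * p^-1^-1) tr12 = p y.
  by rewrite conj_pt invgK yz; congr (p (a _)); apply/eqP; rewrite invp_eq pz.
case: (PC cA) => [[_ [E|E]]|[c3 _]].
- by move: py; rewrite -co E eqxx.
- by rewrite -co.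
- by move: py; rewrite -co (c23 c2 c3) perm1 eqxx.
Qed.

Lemma FA3 a p x y z : a \in A4 -> p \in A4 -> a ^+ 2 != 1 ->
  y \in [:: x; a x; a (a x)] -> z \in [:: x; a x; a (a x)] -> p z = tr12 ->
  p y != tr12 -> p y != tr34.
Proof.
move=> aA pA a2 yO zO pz py.
have a3 := A4_3 aA a2.
have a3x : forall t, a (a (a t)) = t by move=> t; rewrite -expg3_pt a3 perm1.
have yz : y = a z \/ y = a (a z).
  move: yO zO py pz; rewrite !inE => /or3P [] /eqP -> /or3P [] /eqP -> py pz;
    rewrite ?a3x; auto; by rewrite pz eqxx in py.
have cA := conjA4 (groupVr pA) aA.
have c2 : (p^-1 * a * p^-1^-1) ^+ 2 != 1 by rewrite conj_exp1.
have co : (p^-1 * a * p^-1^-1) tr12 = p (a z).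
  by rewrite conj_pt invgK; congr (p (a _)); apply/eqP; rewrite invp_eq pz.
have cco : (p^-1 * a * p^-1^-1) ((p^-1 * a * p^-1^-1) tr12) = p (a (a z)).
  by rewrite co conj_pt invgK permK.
case: (PC cA) => [[/eqP c2' _]|[_ [_ n2 _ n4]]]; first by rewrite c2' in c2.
by rewrite co in n2; rewrite cco in n4; case: yz => ->.
Qed.

Definition nx (a : {perm X4}) x : nat :=
  if a x == x then 1%N else if a ^+ 2 == 1 then 2%N else 3%N.
Definition Orb (a : {perm X4}) (x : X4) : seq X4 := [seq (a ^+ i) x | i <- iota 0 (nx a x)].

Lemma nx_gt0 a x : 0 < nx a x.
Proof. by rewrite /nx; case: ifP => //; case: ifP. Qed.

Lemma expg_nx a x : a \in A4 -> (a ^+ nx a x) x = x.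
Proof.
move=> aA; rewrite /nx; case: ifP => [/eqP //|_].
case: ifP => [/eqP -> | /negbT h]; first by rewrite perm1.
by rewrite (A4_3 aA h) perm1.
Qed.

Lemma Orb_uniq a x : a \in A4 -> uniq (Orb a x).
Proof.
move=> aA; rewrite /Orb /nx; case: ifP => // /negbT ax.
case: ifP => [_|/negbT a2] /=; first by rewrite inE expg0 perm1 expg1 eq_sym ax.
have [n1 n2] := A4_3_nofix x aA a2.
rewrite expg0 perm1 expg1 expg2_pt !inE !negb_or (inj_eq perm_inj).
by rewrite ![x == _]eq_sym ax n2.
Qed.

Lemma Orb_1 (a : {perm X4}) x : a x = x -> Orb a x = [:: x].
Proof. by move=> ax; rewrite /Orb /nx ax eqxx /= expg0 perm1. Qed.
Lemma Orb_2 (a : {perm X4}) x : a x != x -> a ^+ 2 = 1 -> Orb a x = [:: x; a x].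
Proof. by move=> /negbTE ax a2; rewrite /Orb /nx ax a2 eqxx /= expg0 perm1 expg1. Qed.
Lemma Orb_3 (a : {perm X4}) x : a x != x -> a ^+ 2 != 1 -> Orb a x = [:: x; a x; a (a x)].
Proof.
by move=> /negbTE ax /negbTE a2; rewrite /Orb /nx ax a2 /= expg0 perm1 expg1 expg2_pt.
Qed.

Lemma step w x : wA w ->
  wt (Sw (wpow (nx (root w) x) w) x) <= wt w /\
  (wt (Sw (wpow (nx (root w) x) w) x) = wt w ->
     pure (Sw (wpow (nx (root w) x) w) x) \/
     cls (Sw (wpow (nx (root w) x) w) x) < cls w).
Proof.
move=> Hw; have [aA eA] := inT_cl Hw.
set a := root w; set v := Sw _ x.
have Ev : v = flatten [seq Sw w y | y <- Orb a x] by rewrite /v Sw_wpow /Orb -map_comp.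
have Wv : wt v = count (fun e : {perm X4} * nat => e.1^-1 tr12 \in Orb a x) (bl w).
  by rewrite Ev wt_flat // Orb_uniq.
split; first by rewrite Wv -size_bl count_size.
move=> Weq.
have Hall : forall e, e \in bl w -> e.1^-1 tr12 \in Orb a x.
  by apply/allP; rewrite all_count -Wv Weq size_bl.
have Hz : forall e, e \in bl w -> e.1 (e.1^-1 tr12) = tr12 by move=> e _; rewrite permKV.
case E0 : (bl w) => [|e0 l0].
  left; rewrite /pure Ev; apply: all_v => y e _; by rewrite E0.
have e0b : e0 \in bl w by rewrite E0 mem_head.
have pureP : (forall y e, y \in Orb a x -> e \in bl w -> e.1 y = tr12) -> pure v.
  move=> H; rewrite /pure Ev; apply: all_v => y e yO eb.
  by rewrite isB_emit H.
case: (eqVneq (a x) x) => [ax | ax].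
  left; apply: pureP => y e; rewrite (Orb_1 ax) inE => /eqP -> eb.
  by move: (Hall e eb); rewrite (Orb_1 ax) inE invp_eq => /eqP <-.
case: (eqVneq (a ^+ 2) 1) => [a2 | a2].
-
  have H2 : forall e, e \in bl w -> e.1^-1 tr12 \in [:: x; a x].
    by move=> e eb; rewrite -(Orb_2 ax a2) Hall.
  rewrite (Orb_2 ax a2) in Ev.
  have clsw : cls w = 2%N.
    rewrite /cls; case: ifP => [hD|_].
      have [aD eD] := inT_cl hD.
      have := H2 e0 e0b; rewrite (cycD_o (groupVr (eD e0 e0b))) !inE.
      case/orP => /eqP E; move: ax; first by rewrite -E (cycD_o aD) eqxx.
      have -> : x = tr12 by apply: (@perm_inj _ a); rewrite -E (cycD_o aD).
      by rewrite (cycD_o aD) eqxx.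
    case: ifP => // hC; have [aC _] := inT_cl hC.
    by move: ax; rewrite /a (cycC_2 aC a2) perm1 eqxx.
  right; rewrite clsw /cls; case: ifP => // _.
  suff -> : inT <[C]> v by [].
  rewrite /inT Ev; apply: all_v => y e yO eb; rewrite /emit.
  case: (e.1 y =P tr12) => [->|ny]; first by rewrite bsec_o.
  have := FA2 aA (eA e eb) a2 ax yO (H2 e eb) (Hz e eb) (introN eqP ny).
  by move=> ->; rewrite bsec_34 mem_cycle.
-
  have H3 : forall e, e \in bl w -> e.1^-1 tr12 \in [:: x; a x; a (a x)].
    by move=> e eb; rewrite -(Orb_3 ax a2) Hall.
  rewrite (Orb_3 ax a2) in Ev.
  have clsw : 0 < cls w.
    rewrite /cls; case hD: (inT <[D]> w); last by case: ifP.
    have [aD _] := inT_cl hD.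
    by move: a2; rewrite /a (cycD_2 aD) eqxx.
  right; rewrite /cls; suff -> : inT <[D]> v by [].
  rewrite /inT Ev; apply: all_v => y e yO eb; rewrite /emit.
  case: (e.1 y =P tr12) => [->|ny]; first by rewrite bsec_o.
  have := FA3 aA (eA e eb) a2 yO (H3 e eb) (Hz e eb) (introN eqP ny).
  by move=> n34; rewrite (bsec_D (introN eqP ny) n34) mem_cycle.
Qed.

Lemma ev_noB v u : wt v = 0%N -> ev v u = rooted (root v) u.
Proof.
elim: v u => [|[q|n] v IH] u.
- by move=> _; rewrite [root _]/= rooted1.
- move=> h; change (ev v (rooted q u) = rooted (q * root v) u).
  by rewrite -rooted_mul; apply: IH.
- by rewrite /wt /=.
Qed.

Lemma pure_inT G w : pure w -> inT G w.
Proof. by apply: sub_all => -[q|n]. Qed.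

Lemma pure_root w : pure w -> root w = 1 /\ (forall e, e \in bl w -> e.1 = 1).
Proof.
move=> pw; have [r1 H] := inT_cl (pure_inT 1%G pw).
split; first by move: r1; rewrite inE => /eqP.
by move=> e eb; move: (H e eb); rewrite inE => /eqP.
Qed.

Lemma Sw_wpow1 n w y : root w = 1 -> Sw (wpow n w) y = wpow n (Sw w y).
Proof.
move=> r1; elim: n => // n IH.
have -> : wpow n.+1 w = wpow n w ++ w by [].
by rewrite Sw_cat IH root_wpow r1 expg1n perm1.
Qed.

Lemma pure_Sw_o w : pure w -> pure (Sw w tr12).
Proof.
move=> /pure_root [_ H]; rewrite /pure /Sw all_map; apply/allP => e eb /=.
by rewrite isB_emit (H e eb) perm1.
Qed.

Lemma pure_Sw_y w y : pure w -> y != tr12 -> wt (Sw w y) = 0%N.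
Proof.
move=> /pure_root [_ H] yo; rewrite /Sw /wt count_map.
apply/eqP; rewrite eqn0Ngt -has_count; apply/hasPn => e eb /=.
by rewrite isB_emit (H e eb) perm1.
Qed.

Lemma wt_cat w1 w2 : wt (w1 ++ w2) = (wt w1 + wt w2)%N.
Proof. by rewrite /wt count_cat. Qed.

Lemma wt_wpow n w : wt (wpow n w) = (n * wt w)%N.
Proof.
elim: n => // n IH.
have -> : wpow n.+1 w = wpow n w ++ w by [].
by rewrite wt_cat IH mulSnr.
Qed.

Lemma iter_ev_nil k w : iter k (ev w) [::] = [::].
Proof. by rewrite iter_ev ev_nil. Qed.

Lemma pure_period w : pure w -> forall u, iter 6 (ev w) u = u.
Proof.
move=> pw u; rewrite iter_ev.
elim: u w pw => [|y u IH] w pw; first by rewrite ev_nil.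
have [r1 _] := pure_root pw.
rewrite ev_cons root_wpow r1 expg1n perm1 Sw_wpow1 //.
congr (_ :: _).
case: (eqVneq y tr12) => [->|yo].
- exact: IH (pure_Sw_o pw).
- rewrite ev_noB; last by rewrite wt_wpow (pure_Sw_y pw yo) muln0.
  have [rA _] := inT_cl (wA_Sw w y).
  by rewrite root_wpow (A4_6 rA) rooted1.
Qed.

Lemma cls_le2 w : (cls w <= 2)%N.
Proof. by rewrite /cls; case: ifP => //; case: ifP. Qed.

Lemma iter_block w x u j : root w \in A4 ->
  iter (nx (root w) x * j) (ev w) (x :: u) =
  x :: iter j (ev (Sw (wpow (nx (root w) x) w) x)) u.
Proof.
move=> rA; elim: j => [|j IH]; first by rewrite muln0.
by rewrite mulnS iterD IH iter_ev ev_cons root_wpow expg_nx.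
Qed.

Lemma iter_mul (f : seq X4 -> seq X4) N K u :
  (forall u, iter N f u = u) -> iter (N * K) f u = u.
Proof.
move=> H; elim: K => [|K IH]; first by rewrite muln0.
by rewrite mulnS iterD IH H.
Qed.

Lemma period w : wA w -> exists2 N, (0 < N)%N & forall u, iter N (ev w) u = u.
Proof.
move: {2}(mu w).+1 (ltnSn (mu w)) => n.
elim: n w => [|n IHn] w // lt Hw.
have [rA _] := inT_cl Hw.
have Hx : forall x, exists N, (0 < N)%N /\
    forall u, iter N (ev (Sw (wpow (nx (root w) x) w) x)) u = u.
  move=> x; have [le eqc] := step x Hw.
  have wAv := wA_Sw (wpow (nx (root w) x) w) x.
  set v := Sw (wpow (nx (root w) x) w) x in le eqc wAv *.
  have IHv : (mu v < n)%N -> exists N, (0 < N)%N /\ forall u, iter N (ev v) u = u.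
    by move=> h; have [N N0 HN] := IHn v h wAv; exists N.
  have cv := cls_le2 v; have cw := cls_le2 w.
  move: lt; rewrite ltnS /mu => lt.
  case: (ltngtP (wt v) (wt w)) => [lt'|gt|eqw].
  - by apply: IHv; rewrite /mu; lia.
  - by move: le; rewrite leqNgt gt.
  - case: (eqc eqw) => [pv|clt].
      by exists 6%N; split => //; exact: pure_period.
    by apply: IHv; rewrite /mu; lia.
have [N HN] := fin_all_exists Hx.
exists (\prod_(x : X4) (nx (root w) x * N x))%N.
  by apply: prodn_gt0 => x; rewrite muln_gt0 nx_gt0 (proj1 (HN x)).
move=> [|x u]; first exact: iter_ev_nil.
rewrite (bigD1 x) //= -mulnA iter_block //; congr (_ :: _).
by apply: iter_mul; case: (HN x).
Qed.

Definition linv l := match l with LR q => LR q^-1 | LB n => LB (5 * n)%N end.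
Definition winv w := rev (map linv w).

Lemma letfun_inv l u : letfun l (letfun (linv l) u) = u.
Proof.
case: l => [q|n] /=; first by rewrite rooted_mul mulVg rooted1.
exact: bpow_cancel'.
Qed.

Lemma ev_winv w u : ev w (ev (winv w) u) = u.
Proof.
elim: w u => // l w IH u.
rewrite /winv map_cons rev_cons -cats1 ev_cat -/(winv w).
change (ev w (letfun l (letfun (linv l) (ev (winv w) u))) = u).
by rewrite letfun_inv IH.
Qed.

Lemma wA_winv w : wA w -> wA (winv w).
Proof.
rewrite /wA /inT /winv all_rev all_map; apply: sub_all => -[q|n] //=.
by rewrite groupV.
Qed.

Lemma G4_words f : G4 f -> exists2 w, wA w & f =1 ev w.
Proof.
elim => {f}.
- by exists [::].
- move=> f [[a aA Ha] | /B4E [m Hm]].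
  + by exists [:: LR a]; [rewrite /wA inT_cons aA | move=> u; rewrite Ha].
  + by exists [:: LB m]; [ | move=> u; rewrite Hm].
- move=> g h _ [w1 H1 E1] _ [w2 H2 E2]; exists (w1 ++ w2).
    by rewrite /wA /inT all_cat; apply/andP.
  by move=> u; rewrite /tmul ev_cat E1 E2.
- move=> g h _ [w Hw E] Hgh _; exists (winv w); first exact: wA_winv.
  move=> u; have Eu : g (ev (winv w) u) = u by rewrite E ev_winv.
  by rewrite -{1}Eu Hgh.
- by move=> g h _ [w Hw E] Egh; exists w => // u; rewrite -Egh.
Qed.

Theorem mainTheorem14 :
  [/\ CS_group tr12 A4 B4,
      is_stable tr12 A4 B4,
      strongly_orbitwise_abelian tr12 A4 B4,
      (forall (e : X4 -> {perm X4}),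
         e tr12 = 1%g -> (forall x, e x \in A4) -> (forall x, e x tr12 = x) ->
         forall b', B4 b' -> eventually_trivial tr12 A4 e b')
    & is_periodic G4].
Proof.
split.
- exact: CS_part.
- exact: stable_part.
- exact: soa_part.
- exact: et_part.
- move=> g /G4_words [w Hw E].
  have [N N0 HN] := period Hw.
  by exists N => // u; rewrite (eq_iter E) HN.
Qed.
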